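(* Let $p$ be a prime and $(r,e,d)\in\mathscr{B}_0(p)$ with $p\mid r$. Then $r=p$, $e=p-1$, $d=p-1$, and $\det M_d(f(x)^e)=\varepsilon\,\delta(x_1,\ldots,x_r)^{2e-(p-1)}$ with $\varepsilon=1$ if $p\equiv1,2\pmod 4$ and $\varepsilon=-1$ if $p\equiv3\pmod4$.
   Context: Let $p$ be a prime. $\mathscr{B}_0(p)$ is the set of integer triples $(r,e,d)$ with $2\le r\le p+1$, $(p-1)/2<e\le p-1$, $r(p-1-e)\le p-1$, $d=r-1$. Let $x_1,\ldots,x_r$ be independent indeterminates over $\mathbb{F}_p$, $f(x)=(x-x_1)\cdots(x-x_r)$, write $f(x)^e=\sum_{i\ge0}c_ix^i$ ($c_i=0$ for $i<0$), and let $M_d(f(x)^e)$ be the $d\times d$ matrix with $(i,j)$ entry $c_{ip+j-d-1}$. Put $\delta(x_1,\ldots,x_r)=\prod_{1\le i<j\le r}(x_i-x_j)$. *)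

(* Defs.v *)
From HB Require Import structures.
From mathcomp Require Import all_boot all_order all_algebra.
From mathcomp Require Import mpoly.
Set Implicit Arguments. Unset Strict Implicit. Unset Printing Implicit Defensive.
Import GRing.Theory.
Local Open Scope ring_scope.

(* The set B_0(p) of triples (r,e,d). Subtraction p-1 is fine since p >= 2. *)
Definition in_B0 (p r e d : nat) : Prop :=
  [/\ (2 <= r <= p.+1)%N,
      (* (p-1)/2 < e <= p-1, the first inequality read over Q: p-1 < 2e *)
      (p.-1 < 2 * e)%N /\ (e <= p.-1)%N,
      (r * (p.-1 - e) <= p.-1)%N & d = r.-1].

Definition fpoly (F : comRingType) (r : nat) : {poly {mpoly F[r]}} :=
  \prod_(i < r) ('X - ('X_i)%:P).

(* M_d(g): (i,j) entry (1-indexed) c_{ip+j-d-1}, with c_k = 0 for k < 0 *)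
Definition Mmat (R : ringType) (p d : nat) (g : {poly R}) : 'M[R]_d :=
  \matrix_(i < d, j < d)
    (let k := (i.+1 * p + j.+1)%N in
     if (d.+1 <= k)%N then g`_(k - d.+1) else 0).

Definition vdelta (F : comRingType) (r : nat) : {mpoly F[r]} :=
  \prod_(i < r) \prod_(j < r | (i < j)%N) ('X_i - 'X_j).

(* Main.v *)
Require Import Defs.
From HB Require Import structures.
From mathcomp Require Import all_boot all_order all_algebra.
From mathcomp Require Import mpoly.
From mathcomp Require Import fingroup perm.
From mathcomp Require Import zify ring.
Import GRing.Theory.
Local Open Scope ring_scope.
Lemma divn_uniq (q d X : nat) : (q * d <= X < q * d + d)%N -> (X %/ d = q)%N.
Proof.
move=> /andP[h1 h2].
have dp : (0 < d)%N by lia.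
have -> : X = (q * d + (X - q * d))%N by lia.
rewrite divnMDl // divn_small ?addn0 //; lia.
Qed.

Lemma sumA (R : comNzRingType) (n m j : nat) (c : R) :
  (m <= n * n)%N -> (j < n)%N ->
  \sum_(i < n) (c ^+ n.+1) ^+ i *
     (if (i * n.+1 + j.+1 < m)%N then 0
      else if (i * n.+1 + j.+1 - m < n.+1)%N then c ^+ (n - (i * n.+1 + j.+1 - m))
      else 0)
  = c ^+ (n - j.+1 + m).
Proof.
move=> hm hj.
set X := (m + n - j.+1)%N.
have hi0 : (X %/ n.+1 < n)%N by rewrite ltn_divLR //; lia.
rewrite (bigD1 (Ordinal hi0)) //= big1 ?addr0; last first.
  move=> i /eqP hne.
  case: ifP => h1; first by rewrite mulr0.
  case: ifP => h2; last by rewrite mulr0.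
  exfalso; apply: hne; apply: val_inj => /=.
  symmetry; apply: divn_uniq; lia.
set i0 := (X %/ n.+1)%N.
have e1 := divn_eq X n.+1.
have e2 : (X %% n.+1 < n.+1)%N by rewrite ltn_mod.
rewrite -/i0 in e1 *.
have -> : (i0 * n.+1 + j.+1 < m)%N = false by apply/negbTE; lia.
have -> : (i0 * n.+1 + j.+1 - m < n.+1)%N by lia.
rewrite -exprM -exprD; congr (_ ^+ _); lia.
Qed.
Definition Spoly (R : nzRingType) (n : nat) (c : R) : {poly R} :=
  \poly_(m < n.+1) c ^+ (n - m).
Arguments Spoly {R}.

Lemma keyL (R : comNzRingType) (n j : nat) (c : R) (H : {poly R}) :
  (size H <= (n * n).+1)%N -> (j < n)%N ->
  \sum_(i < n) (c ^+ n.+1) ^+ i * (Spoly n c * H)`_(i * n.+1 + j.+1)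
  = c ^+ (n - j.+1) * H.[c].
Proof.
move=> hs hj.
have HE : H = \sum_(m < (n * n).+1) H`_m *: 'X^m.
  rewrite -poly_def; apply/polyP => k; rewrite coef_poly.
  case: ifP => // /negbT hk; rewrite nth_default //; rewrite -ltnNge in hk; exact: leq_trans hs hk.
rewrite (horner_coef_wide c hs) mulr_sumr.
transitivity (\sum_(i < n) \sum_(m < (n * n).+1) (c ^+ n.+1) ^+ i *
   (H`_m * (Spoly n c * 'X^m)`_(i * n.+1 + j.+1))).
  apply: eq_bigr => i _; rewrite {1}HE mulr_sumr coef_sum mulr_sumr.
  by apply: eq_bigr => m _; rewrite -scalerAr coefZ.
rewrite exchange_big /=; apply: eq_bigr => m _.
have hm : (m <= n * n)%N by have := ltn_ord m; lia.
have -> : c ^+ (n - j.+1) * (H`_m * c ^+ m) = H`_m * c ^+ (n - j.+1 + m) by rewrite exprD; ring.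
rewrite -(@sumA R n m j c hm hj) mulr_sumr; apply: eq_bigr => i _.
rewrite coefMXn /Spoly coef_poly.
case: ifP => _; first by rewrite !mulr0.
case: ifP => _; last by rewrite !mulr0.
ring.
Qed.
Lemma Spoly_sum (R : comNzRingType) (n : nat) (c : R) :
  \sum_(i < n.+1) 'X ^+ (n.+1.-1 - i) * c%:P ^+ i = Spoly n c.
Proof.
apply/polyP => m; rewrite coef_sum /Spoly coef_poly.
under eq_bigr => i _ do rewrite -polyC_exp mulrC coefCM coefXn succnK.
case: ifP => hm.
  have hi : (n - m < n.+1)%N by lia.
  rewrite (bigD1 (Ordinal hi)) //= big1 ?addr0.
    have -> : (m == n - (n - m))%N by apply/eqP; lia.
    by rewrite mulr1.
  move=> i /eqP hne; case: eqP => h; last by rewrite mulr0.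
  exfalso; apply: hne; apply: val_inj => /=; have := ltn_ord i; lia.
rewrite big1 // => i _; case: eqP => h; last by rewrite mulr0.
have := ltn_ord i; lia.
Qed.

Lemma Spoly_XsubC (R : idomainType) (n : nat) (c : R) :
  n.+1 \in [pchar R] -> Spoly n c = ('X - c%:P) ^+ n.
Proof.
move=> hp.
have hP : n.+1 \in [pchar {poly R}] by apply: (rmorph_pchar (@polyC R)).
have e1 : ('X - c%:P) ^+ n.+1 = 'X ^+ n.+1 - c%:P ^+ n.+1.
  have := pFrobenius_autB_comm hP (mulrC 'X c%:P).
  by rewrite !pFrobenius_autE.
have e2 := subrXX 'X c%:P n.+1.
rewrite Spoly_sum -e1 exprS in e2.
apply: (mulfI (negbT (polyXsubC_eq0 c))); exact: (esym e2).
Qed.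
Lemma detW (R : comNzRingType) (n : nat) (a : 'I_n -> R) :
  \det (\matrix_(k < n, j < n) a k ^+ (n - j.+1))
  = \prod_(i < n) \prod_(j < n | (i < j)%N) (a i - a j).
Proof.
set W := \matrix_(k < n, j < n) a k ^+ (n - j.+1).
pose s : 'S_n := perm (@rev_ord_inj n).
have e1 : \det (row_perm s (col_perm s W)) = \det W.
  rewrite row_permE col_permE !det_mulmx !det_perm odd_permV.
  case: (odd_perm s); rewrite /= ?expr0 ?expr1 ?mulr1 ?mul1r //.
  by rewrite mulN1r mulrN1 opprK.
have e2 : row_perm s (col_perm s W) = (Vandermonde n (\row_k a (rev_ord k)))^T.
  apply/matrixP => i j; rewrite !mxE !permE; congr (_ ^+ _) => /=.
  have := ltn_ord j; lia.
rewrite -e1 e2 det_tr det_Vandermonde.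
under eq_bigr => i _ do under eq_bigr => j _ do rewrite !mxE.
rewrite !pair_big_dep /=.
pose h (p : 'I_n * 'I_n) := (rev_ord p.2, rev_ord p.1).
rewrite (reindex_inj (h := h)); last first.
  move=> [x1 y1] [x2 y2] e.
  have h1 := congr1 fst e; have h2 := congr1 snd e; rewrite /= in h1 h2.
  by rewrite (rev_ord_inj h1) (rev_ord_inj h2).
apply: eq_big => [[x y]|[x y] _] /=; last by rewrite !rev_ordK.
have := ltn_ord x; have := ltn_ord y; lia.
Qed.
Lemma prod_pairs_recr (R : comNzRingType) n (F : 'I_n.+1 -> 'I_n.+1 -> R) :
  \prod_(i < n.+1) \prod_(j < n.+1 | (i < j)%N) F i j =
  \prod_(i < n) ((\prod_(j < n | (i < j)%N)
       F (widen_ord (leqnSn n) i) (widen_ord (leqnSn n) j))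
     * F (widen_ord (leqnSn n) i) ord_max).
Proof.
rewrite big_ord_recr /= [X in _ * X = _]big1 ?mulr1; last by move=> j; rewrite /= ltnNge -ltnS ltn_ord.
apply: eq_bigr => i _; rewrite big_mkcond big_ord_recr /= -big_mkcond /=.
by rewrite ltn_ord.
Qed.

Lemma sign_pairs (R : comNzRingType) n :
  \prod_(i < n) \prod_(j < n | (i < j)%N) (-1 : R) = (-1) ^+ 'C(n, 2).
Proof.
elim: n => [|n IH]; first by rewrite big_ord0.
rewrite prod_pairs_recr big_split /= IH prodr_const card_ord binS bin1 exprD.
done.
Qed.
Lemma final_comb (R : comNzRingType) n (a : 'I_n -> R) (z : R) :
  (-1 : R) ^+ n = 1 ->
  (forall x y : R, y ^+ n.+1 - x ^+ n.+1 = - ((x - y) ^+ n * (x - y))) ->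
  (\prod_(k < n) (\prod_(l < n | (k < l)%N) (a k - a l) ^+ n
                  * \prod_(l < n | (l < k)%N) (a k - a l) ^+ n * (a k - z) ^+ n))
   * \prod_(i < n) \prod_(j < n | (i < j)%N) (a i - a j)
  = (\prod_(i < n) \prod_(j < n | (i < j)%N) (a j ^+ n.+1 - a i ^+ n.+1))
    * ((\prod_(i < n) \prod_(j < n | (i < j)%N) (-1))
       * (\prod_(i < n) (\prod_(j < n | (i < j)%N) (a i - a j) * (a i - z))) ^+ n).
Proof.
move=> hs hf.
have ex : \prod_(k < n) \prod_(l < n | (l < k)%N) (a k - a l) ^+ n
        = \prod_(i < n) \prod_(j < n | (i < j)%N) (a i - a j) ^+ n.
  rewrite (exchange_big_dep xpredT) //=; apply: eq_bigr => i _.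
  apply: eq_bigr => j _.
  by rewrite -opprB -mulN1r exprMn hs mul1r.
rewrite !big_split /= ex.
rewrite exprMn -prodrXl.
under [X in _ = _ * (_ * (X * _))]eq_bigr => i _ do rewrite -prodrXl.
under [X in _ = X * _]eq_bigr => i _ do under eq_bigr => j _ do rewrite hf -mulN1r.
under [X in _ = X * _]eq_bigr => i _ do rewrite big_split /= big_split /=.
rewrite [X in _ = X * _]big_split /= [X in _ = (_ * X) * _]big_split /=.
set E := \prod_(i < n) \prod_(j < n | (i < j)%N) (-1 : R).
have hE : E * E = 1.
  rewrite /E -big_split; apply: big1 => i _; rewrite -big_split.
  by apply: big1 => j _; rewrite /= mulrNN mulr1.
set A := \prod_(i < n) \prod_(j < n | (i < j)%N) (a i - a j) ^+ n.
set B := \prod_(i < n) \prod_(j < n | (i < j)%N) (a i - a j).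
set Z := \prod_(i < n) (a i - z) ^+ n.
transitivity ((E * E) * (A * A * Z * B)); first by rewrite hE mul1r.
rewrite /Z prodrXl; ring.
Qed.
Lemma main_generic (R : idomainType) n (u : 'I_n.+1 -> R) :
  n.+1 \in [pchar R] -> injective u ->
  \det (Mmat n.+1 n ((\prod_(i < n.+1) ('X - (u i)%:P)) ^+ n))
  = (-1) ^+ 'C(n, 2) *
    (\prod_(i < n.+1) \prod_(j < n.+1 | (i < j)%N) (u i - u j)) ^+ n.
Proof.
move=> hp uinj.
pose w (k : 'I_n) : 'I_n.+1 := widen_ord (leqnSn n) k.
pose a (k : 'I_n) := u (w k).
set g := (\prod_(i < n.+1) ('X - (u i)%:P)) ^+ n.
pose Hk (k : 'I_n) := \prod_(l < n.+1 | l != w k) ('X - (u l)%:P) ^+ n.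
have gE : forall k, g = Spoly n (a k) * Hk k.
  move=> k; rewrite /g -prodrXl (bigD1 (w k)) //= Spoly_XsubC //.
have sH : forall k, (size (Hk k) <= (n * n).+1)%N.
  move=> k; rewrite /Hk size_prod; last first.
    by move=> l _; rewrite expf_neq0 // polyXsubC_eq0.
  under eq_bigr => l _ do rewrite size_exp_XsubC.
  rewrite sum_nat_const.
  have -> : #|[pred l : 'I_n.+1 | l != w k]| = n by rewrite cardC1 card_ord.
  lia.
pose lam (k : 'I_n) := (Hk k).[a k].
pose V : 'M[R]_n := \matrix_(k, i) (a k ^+ n.+1) ^+ i.
pose W : 'M[R]_n := \matrix_(k < n, j < n) a k ^+ (n - j.+1).
have VM : V *m Mmat n.+1 n g = diag_mx (\row_k lam k) *m W.
  apply/matrixP => k j; rewrite mul_diag_mx !mxE.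
  transitivity (\sum_(i < n) (a k ^+ n.+1) ^+ i * (Spoly n (a k) * Hk k)`_(i * n.+1 + j.+1)).
    apply: eq_bigr => i _; rewrite !mxE -gE.
    rewrite /=; have -> : (n < i.+1 * n.+1 + j.+1)%N by lia.
    congr (_ * g`_ _); lia.
  by rewrite keyL // mulrC.
have detV : \det V = \prod_(i < n) \prod_(j < n | (i < j)%N) (a j ^+ n.+1 - a i ^+ n.+1).
  have -> : V = (Vandermonde n (\row_k a k ^+ n.+1))^T by apply/matrixP => i j; rewrite !mxE.
  rewrite det_tr det_Vandermonde; apply: eq_bigr => i _; apply: eq_bigr => j _; rewrite !mxE.
  done.
have frob : forall x y : R, (x - y) ^+ n.+1 = x ^+ n.+1 - y ^+ n.+1.
  move=> x y; have := pFrobenius_autB_comm hp (mulrC x y); by rewrite !pFrobenius_autE.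
have detV0 : \det V != 0.
  rewrite detV; apply/prodf_neq0 => i _; apply/prodf_neq0 => j hij.
  rewrite -frob expf_neq0 // subr_eq0; apply/eqP => /uinj /(congr1 val) /= h.
  by rewrite h ltnn in hij.
have hs : (-1 : R) ^+ n = 1.
  have := pFrobenius_autN hp 1; rewrite !pFrobenius_autE expr1n exprS mulN1r.
  exact: oppr_inj.
have hf : forall x y : R, y ^+ n.+1 - x ^+ n.+1 = - ((x - y) ^+ n * (x - y)).
  move=> x y; rewrite -frob -opprB; have := pFrobenius_autN hp (x - y).
  by rewrite !pFrobenius_autE => ->; rewrite exprSr.
have split : forall k (F : 'I_n.+1 -> R), \prod_(l < n.+1 | l != w k) F l
    = \prod_(l < n | (k < l)%N) F (w l) * \prod_(l < n | (l < k)%N) F (w l) * F ord_max.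
  move=> k F; rewrite big_mkcond big_ord_recr /=.
  have -> : (ord_max != w k) by apply/eqP => /(congr1 val) /= h; have := ltn_ord k; lia.
  rewrite -big_mkcond /= (bigID (fun l : 'I_n => (k < l)%N)) /=.
  congr (_ * _ * _); apply: eq_bigl => l /=; rewrite -(inj_eq val_inj) /=;
    by case: ltngtP.
apply: (mulfI detV0).
rewrite -det_mulmx VM det_mulmx det_diag detW.
rewrite -sign_pairs prod_pairs_recr.
under eq_bigr => k _ do (rewrite mxE /lam /Hk horner_prod;
  under eq_bigr => l _ do rewrite horner_exp hornerXsubC; rewrite split).
rewrite detV.
exact: final_comb.
Qed.
Lemma binS4 m : 'C(m.+4, 2) = ('C(m, 2) + (m * 4 + 6))%N.
Proof. rewrite !binS !bin1 !bin0; lia. Qed.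

Lemma oddC2 q s : odd 'C(q * 4 + s, 2) = odd 'C(s, 2).
Proof.
elim: q => [|q IH] //.
have -> : (q.+1 * 4 + s = (q * 4 + s).+4)%N by lia.
by rewrite binS4 oddD IH oddD oddM andbF addbF.
Qed.

Lemma Xinj (p n : nat) : prime p -> injective (fun i : 'I_n => ('X_i : {mpoly 'F_p[n]})).
Proof.
move=> pp i j /= h.
have := congr1 (fun q : {mpoly 'F_p[n]} => q@_U_(i)) h.
rewrite !mcoeffX eqxx eq_mnm1.
case: eqP => // _ /eqP; by rewrite oner_eq0.
Qed.

Theorem proposition5 (p r e d : nat) :
  prime p -> in_B0 p r e d -> (p %| r)%N ->
  [/\ r = p, e = p.-1, d = p.-1,
      ((p %% 4 = 1)%N \/ (p %% 4 = 2)%N ->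
         \det (Mmat p d (fpoly 'F_p r ^+ e))
         = vdelta 'F_p r ^+ (2 * e - p.-1)) &
      ((p %% 4 = 3)%N ->
         \det (Mmat p d (fpoly 'F_p r ^+ e))
         = - vdelta 'F_p r ^+ (2 * e - p.-1))].
Proof.
move=> pp [hr [he1 he2] hre hd] hdvd.
have p1 := prime_gt1 pp.
have rp : r = p.
  case/dvdnP: hdvd => q hq; subst r.
  have : q = 1%N by nia.
  by move=> ->; rewrite mul1n.
subst r.
have ep : e = p.-1 by nia.
subst e d.
have hex : (2 * p.-1 - p.-1 = p.-1)%N by lia.
rewrite hex.
have key : \det (Mmat p p.-1 (fpoly 'F_p p ^+ p.-1))
           = (-1) ^+ 'C(p.-1, 2) * vdelta 'F_p p ^+ p.-1.
  clear -pp p1; case: p pp p1 => [//|n] pp _.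
  apply: main_generic; last exact: Xinj.
  apply: (rmorph_pchar (@mpolyC n.+1 _)); exact: pchar_Fp.
rewrite key -signr_odd.
have hn := divn_eq p.-1 4.
split => //.
  move=> h4.
  have hm : (p.-1 %% 4 = 0 \/ p.-1 %% 4 = 1)%N by lia.
  rewrite hn oddC2.
  by case: hm => ->; rewrite /= expr0 mul1r.
move=> h4.
have hm : (p.-1 %% 4 = 2)%N by lia.
by rewrite hn oddC2 hm /= expr1 mulN1r.
Qed.
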